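(* Let $\mathbb{F}$ be a field, $P\in\mathbb{F}[x_1,\ldots,x_n]$ a polynomial, $\mathcal{F}\subseteq\mathbb{F}^n$ a finite set with $\mathcal{F}\ne\mathbb{F}^n$, and $h\in\mathbb{F}^n\setminus\mathcal{F}$. Put $\mathcal{T}:=\mathcal{F}\cup\{h\}$. Suppose $P(h)\ne 0$ and $P(f)=0$ for every $f\in\mathcal{F}$. If $y$ is a monomial with $y\in \mathrm{Sm}(\prec_{deg},\mathcal{T})\setminus\mathrm{Sm}(\prec_{deg},\mathcal{F})$, then $\deg P\ge\deg y$.
   Context: For a finite nonempty $\mathcal{F}\subseteq\mathbb{F}^n$, $I(\mathcal{F}):=\{f\in\mathbb{F}[x_1,\ldots,x_n]: f(v)=0\ \forall v\in\mathcal{F}\}$. For a term order $\prec$, the leading monomial $\mathrm{lm}(f)$ of a nonzero polynomial is its $\prec$-largest monomial with nonzero coefficient; $\mathrm{Sm}(\prec,\mathcal{F})$ is the set of monomials that are not the leading monomial of any nonzero $f\in I(\mathcal{F})$ (standard monomials). The deglex order $\prec_{deg}$: $u\prec_{deg}v$ iff $\deg u<\deg v$, or $\deg u=\deg v$ and $u\prec_{lex}v$, where for $u=x^{i}$, $v=x^{j}$, $u\prec_{lex}v$ iff $i_k<j_k$ at the smallest index $k$ with $i_k\ne j_k$ (so $x_n\prec\cdots\prec x_1$). *)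

(* Defs.v *)
From HB Require Import structures.
From mathcomp Require Import all_boot all_order all_algebra.
Set Implicit Arguments. Unset Strict Implicit. Unset Printing Implicit Defensive.
Import Order.TTheory GRing.Theory Num.Theory.

Definition pt (F : fieldType) (n : nat) := {ffun 'I_n -> F}.

Definition mon (n : nat) := {ffun 'I_n -> nat}.

Definition mdeg (n : nat) (m : mon n) : nat := (\sum_(i < n) m i)%N.

Record mpoly (F : fieldType) (n : nat) := MPoly {
  mcoef : mon n -> F;
  msupp : seq (mon n);
  msupp_ok : forall m, mcoef m != 0%R -> m \in msupp
}.

Definition meval (F : fieldType) (n : nat) (P : mpoly F n) (v : pt F n) : F :=
  (\sum_(m <- undup (msupp P)) mcoef P m * \prod_(i < n) v i ^+ m i)%R.

Definition mtdeg (F : fieldType) (n : nat) (P : mpoly F n) : nat :=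
  (\max_(m <- msupp P | mcoef P m != 0%R) mdeg m)%N.

Definition lex_lt (n : nat) (u v : mon n) : Prop :=
  exists k : 'I_n, (forall j : 'I_n, (j < k)%N -> u j = v j) /\ (u k < v k)%N.

Definition deglex_lt (n : nat) (u v : mon n) : Prop :=
  (mdeg u < mdeg v)%N \/ (mdeg u = mdeg v /\ lex_lt u v).

Definition is_lm (F : fieldType) (n : nat) (P : mpoly F n) (m : mon n) : Prop :=
  mcoef P m != 0%R /\
  forall m', mcoef P m' != 0%R -> m' = m \/ deglex_lt m' m.

Definition in_ideal (F : fieldType) (n : nat) (S : seq (pt F n)) (f : mpoly F n) : Prop :=
  forall v, v \in S -> meval f v = 0%R.

Definition Sm_deg (F : fieldType) (n : nat) (S : seq (pt F n)) (m : mon n) : Prop :=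
  ~ exists f : mpoly F n, in_ideal S f /\ is_lm f m.

(* Main.v *)
Require Import Defs.
From HB Require Import structures.
From mathcomp Require Import all_boot all_order all_algebra.
Import Order.TTheory GRing.Theory Num.Theory.
Local Open Scope ring_scope.

Lemma sum_filter_coef (F : fieldType) (n : nat) (P : mpoly F n) (v : pt F n)
  (s : seq (mon n)) :
  \sum_(m <- s) mcoef P m * \prod_(i < n) v i ^+ m i =
  \sum_(m <- [seq m <- s | mcoef P m != 0]) mcoef P m * \prod_(i < n) v i ^+ m i.
Proof.
rewrite big_filter [RHS]big_mkcond /=; apply: eq_bigr => m _.
by case: eqP => [->|]; rewrite ?mul0r.
Qed.

Lemma meval_any (F : fieldType) (n : nat) (P : mpoly F n) (v : pt F n)
  (s : seq (mon n)) : uniq s -> (forall m, mcoef P m != 0 -> m \in s) ->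
  meval P v = \sum_(m <- s) mcoef P m * \prod_(i < n) v i ^+ m i.
Proof.
move=> us hs; rewrite /meval [LHS]sum_filter_coef [RHS]sum_filter_coef.
apply: perm_big; apply: uniq_perm; rewrite ?filter_uniq ?undup_uniq //.
move=> m; rewrite !mem_filter mem_undup.
have [Hm|Hm] := boolP (mcoef P m != 0) => //=.
by rewrite (msupp_ok Hm) hs.
Qed.

Section G.
Variables (F : fieldType) (n : nat) (f P : mpoly F n) (c : F).
Definition gcoef (m : mon n) := mcoef f m - c * mcoef P m.
Lemma g_ok m : gcoef m != 0 -> m \in msupp f ++ msupp P.
Proof.
rewrite /gcoef mem_cat => H.
case: (boolP (mcoef f m != 0)) => [/msupp_ok -> //|].
rewrite negbK => /eqP Hf; rewrite Hf sub0r oppr_eq0 mulf_eq0 negb_or in H.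
by case/andP: H => _ /msupp_ok ->; rewrite orbT.
Qed.
Definition gpoly := MPoly g_ok.
Lemma meval_g v : meval gpoly v = meval f v - c * meval P v.
Proof.
have us := undup_uniq (msupp f ++ msupp P).
rewrite (@meval_any _ _ gpoly v _ us); last by move=> m /g_ok; rewrite mem_undup.
rewrite (@meval_any _ _ f v _ us); last by move=> m /msupp_ok; rewrite mem_undup mem_cat => ->.
rewrite (@meval_any _ _ P v _ us); last by move=> m /msupp_ok; rewrite mem_undup mem_cat => ->; rewrite orbT.
rewrite mulr_sumr -sumrB; apply: eq_bigr => m _ /=.
by rewrite /gcoef mulrBl mulrA.
Qed.
End G.

Theorem theorem3 (F : fieldType) (n : nat) (P : mpoly F n)
  (Fs : seq (pt F n)) (h : pt F n)
  (hFs_proper : exists v : pt F n, v \notin Fs)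
  (hh : h \notin Fs)
  (hPh : meval P h != 0%R)
  (hPF : forall f, f \in Fs -> meval P f = 0%R)
  (y : mon n)
  (hyT : Sm_deg (h :: Fs) y)
  (hyF : ~ Sm_deg Fs y) :
  (mdeg y <= mtdeg P)%N.
Proof.
case: (leqP (mdeg y) (mtdeg P)) => // Hlt; exfalso.
have degP : forall m, mcoef P m != 0 -> (mdeg m <= mtdeg P)%N.
  move=> m Hm; rewrite /mtdeg.
  apply: (@leq_bigmax_seq _ _ (fun m => mcoef P m != 0) (@mdeg n) m) => //.
  exact: msupp_ok.
apply: hyF => -[f [If [Lf1 Lf2]]].
apply: hyT.
set c := meval f h / meval P h.
exists (@gpoly _ _ f P c); split.
  move=> v; rewrite inE => /orP [/eqP ->|Hv]; rewrite meval_g.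
    by rewrite /c divfK // subrr.
  by rewrite If // hPF // mulr0 subr0.
have Py : mcoef P y = 0.
  by apply/eqP; apply: contraTT Hlt => /degP; rewrite -leqNgt.
split; first by rewrite /= /gcoef Py mulr0 subr0.
move=> m' /=; rewrite /gcoef.
case: (boolP (mcoef f m' != 0)) => [/Lf2 //|].
rewrite negbK => /eqP ->; rewrite sub0r oppr_eq0 mulf_eq0 negb_or => /andP [_ /degP Hm].
right; left; exact: leq_ltn_trans Hm Hlt.
Qed.
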